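(* Let $K$ be a field, $Q$ the bipartite type $A$ quiver with vertices $y_0,x_1,\dots,x_n,y_n$ and arrows $\alpha_i\colon x_i\to y_{i-1}$, $\beta_i\colon x_i\to y_i$, $\mathbf{d}$ a dimension vector, and $\mathbf{r}$ a quiver rank array. A matrix $Z\in Y^{\mathbf{w}}_\circ$ satisfies $\operatorname{rank}Z_{i\times j}=\mathbf{b}(\mathbf{r})_{i,j}$ for all $1\le i,j\le 2n+1$ if and only if $Z=\zeta(V)$ for some $V\in\mathrm{rep}_Q(\mathbf{d})$ satisfying $\mathbf{r}$.
   Context: $\mathrm{rep}_Q(\mathbf{d})$: tuples $V=(V_a)$, $V_a\in\mathrm{Mat}_{\mathbf{d}(ha)\times\mathbf{d}(ta)}(K)$, with $\mathbf{GL}(\mathbf{d})$ acting by $g\cdot V=(g_{ha}V_ag_{ta}^{-1})$. Intervals are nonempty sets of consecutive vertices with the arrows between them. $M_Q(V)$ is the block matrix with block rows $y_0,\dots,y_n$ and block columns $x_n,\dots,x_1$, $V_{\alpha_i}$ in block $(y_{i-1},x_i)$, $V_{\beta_i}$ in block $(y_i,x_i)$, zeros elsewhere; $M_J(V)$ is its submatrix on the block rows of the $y$-vertices in $J$ and block columns of the $x$-vertices in $J$; $r_J(V)=\operatorname{rank}M_J(V)$. A quiver rank array is a function $\mathbf{r}$ on intervals such that some $V$ has $r_J(V)=\mathbf{r}_J$ for all $J$ (''$V$ satisfies $\mathbf{r}$''); $\mathcal{O}_\mathbf{r}$ is the set of such $V$. $d_x=\sum\mathbf{d}(x_i)$, $d_y=\sum\mathbf{d}(y_i)$,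 $d=d_x+d_y$; $Y^{\mathbf{w}}_\circ$ is the set of $d\times d$ matrices $\begin{pmatrix}*&\mathbf{1}_{d_y}\\ \mathbf{1}_{d_x}&0\end{pmatrix}$; $\zeta(V)=\begin{pmatrix}M_Q(V)&\mathbf{1}_{d_y}\\ \mathbf{1}_{d_x}&0\end{pmatrix}$. Row blocks have sizes $\mathbf{d}(y_0),\dots,\mathbf{d}(y_n),\mathbf{d}(x_n),\dots,\mathbf{d}(x_1)$, column blocks sizes $\mathbf{d}(x_n),\dots,\mathbf{d}(x_1),\mathbf{d}(y_0),\dots,\mathbf{d}(y_n)$, numbered $1..2n+1$; $Z_{i\times j}$ is the submatrix of block rows $1..i$ and block columns $1..j$. $\mathbf{b}(\mathbf{r})_{i,j}=\operatorname{rank}\zeta(V)_{i\times j}$ for any $V\in\mathcal{O}_\mathbf{r}$ (independent of the choice). *)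

(* Defs.v *)
From HB Require Import structures.
From mathcomp Require Import all_boot all_order all_algebra.
From Stdlib Require Import ClassicalEpsilon.
Set Implicit Arguments. Unset Strict Implicit. Unset Printing Implicit Defensive.
Import GRing.Theory.
Local Open Scope ring_scope.

(* A dimension vector is given by dy k = d(y_k) (k = 0..n) and
   dx k = d(x_k) (k = 1..n); values outside these ranges are never used.
   A representation: Valpha i = V_(alpha_(i+1)) and Vbeta i = V_(beta_(i+1))
   for i : 'I_n (0-based index). *)

Section QuiverDefs.
Variable K : fieldType.
Variable n : nat.
Variables dy dx : nat -> nat.

Record rep := Rep {
  Valpha : forall i : 'I_n, 'M[K]_(dy i, dx i.+1);
  Vbeta  : forall i : 'I_n, 'M[K]_(dy i.+1, dx i.+1)
}.

Definition rep0 : rep := Rep (fun i => 0) (fun i => 0).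

Definition sy : seq nat := map dy (iota 0 n.+1).
Definition sxr : seq nat := map dx (rev (iota 1 n)).
Definition dyt : nat := sumn sy.
Definition dxt : nat := sumn sxr.

End QuiverDefs.

(* index of the block (w.r.t. block sizes s) containing the flat index r *)
Definition bidx (s : seq nat) (r : nat) : nat :=
  count (fun i => sumn (take i.+1 s) <= r)%N (iota 0 (size s)).
Definition boff (s : seq nat) (r : nat) : nat := (r - sumn (take (bidx s r) s))%N.

(* entry of a matrix at nat indices (0 outside the matrix) *)
Definition mxe (K : fieldType) (m p : nat) (A : 'M[K]_(m, p)) (i j : nat) : K :=
  match (insub i : option 'I_m), (insub j : option 'I_p) with
  | Some i', Some j' => A i' j'
  | _, _ => 0
  end.

Section QuiverMatrices.
Variable K : fieldType.
Variable n : nat.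
Variables dy dx : nat -> nat.

(* M_Q(V): block rows y_0..y_n, block columns x_n..x_1; V_(alpha_i) in block
   (y_(i-1), x_i), V_(beta_i) in block (y_i, x_i), zero elsewhere. *)
Definition MQ (V : rep K n dy dx) : 'M[K]_(dyt n dy, dxt n dx) :=
  \matrix_(a, b)
    let p := bidx (sy n dy) a in
    let q := bidx (sxr n dx) b in
    let oa := boff (sy n dy) a in
    let ob := boff (sxr n dx) b in
    match (insub (n - q.+1)%N : option 'I_n) with   (* i with x_(i+1) = x_(n-q) *)
    | Some i =>
        if p == (i : nat) then mxe (Valpha V i) oa ob
        else if p == i.+1 then mxe (Vbeta V i) oa ob
        else 0
    | None => 0
    end.

(* Intervals: the vertices are linearly ordered y_0, x_1, y_1, ..., x_n, y_n,
   and we give y_k position 2k and x_k position 2k-1.  An interval is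
   [a0, b0] = the vertices with positions between a0 and b0, 0 <= a0 <= b0 <= 2n. *)
Definition inJ (a0 b0 pos : nat) : bool := (a0 <= pos <= b0)%N.

Definition rowsJ (a0 b0 : nat) : seq nat :=
  [seq r <- iota 0 (dyt n dy) | inJ a0 b0 (2 * bidx (sy n dy) r)].
Definition colsJ (a0 b0 : nat) : seq nat :=
  [seq c <- iota 0 (dxt n dx) | inJ a0 b0 (2 * (n - bidx (sxr n dx) c)).-1].

Definition MJ (V : rep K n dy dx) (a0 b0 : nat)
  : 'M[K]_(size (rowsJ a0 b0), size (colsJ a0 b0)) :=
  \matrix_(a, b) mxe (MQ V) (nth 0%N (rowsJ a0 b0) a) (nth 0%N (colsJ a0 b0) b).

Definition rJ (V : rep K n dy dx) (a0 b0 : nat) : nat := \rank (MJ V a0 b0).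

Definition satisfies (V : rep K n dy dx) (r : nat -> nat -> nat) : Prop :=
  forall a0 b0 : nat, (a0 <= b0 <= 2 * n)%N -> rJ V a0 b0 = r a0 b0.

Definition quiver_rank_array (r : nat -> nat -> nat) : Prop :=
  exists V : rep K n dy dx, satisfies V r.

Definition Ymat := 'M[K]_(dyt n dy + dxt n dx, dxt n dx + dyt n dy).

Definition in_Ycirc (Z : Ymat) : Prop :=
  exists A : 'M[K]_(dyt n dy, dxt n dx), Z = block_mx A 1%:M 1%:M 0.

Definition zeta (V : rep K n dy dx) : Ymat := block_mx (MQ V) 1%:M 1%:M 0.

Definition zrows : seq nat := sy n dy ++ sxr n dx.
Definition zcols : seq nat := sxr n dx ++ sy n dy.

(* rank of Z_(i x j): block rows 1..i and block columns 1..j *)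
Definition rankZ (Z : Ymat) (i j : nat) : nat :=
  \rank (\matrix_(a < sumn (take i zrows), b < sumn (take j zcols)) mxe Z a b).

(* b(r)_(i,j) = rank zeta(V)_(i x j) for (a chosen) V in O_r *)
Definition bR (r : nat -> nat -> nat) (i j : nat) : nat :=
  rankZ (zeta (epsilon (inhabits (rep0 K n dy dx)) (fun V => satisfies V r))) i j.

End QuiverMatrices.

(* Main.v *)
Require Import Defs.
From HB Require Import structures.
From mathcomp Require Import all_boot all_order all_algebra zify.
From Stdlib Require Import ClassicalEpsilon.
Set Implicit Arguments. Unset Strict Implicit. Unset Printing Implicit Defensive.

Module W.
Import GRing.Theory.
Local Open Scope ring_scope.

Section Rk.
Variable K : fieldType.

Definition rk (f : nat -> nat -> K) (rs cs : seq nat) : nat :=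
  \rank (\matrix_(a < size rs, b < size cs) f (nth 0%N rs a) (nth 0%N cs b)).

Lemma rk_gen f rs cs m p (em : size rs = m) (ep : size cs = p) :
  \rank (\matrix_(a < m, b < p) f (nth 0%N rs a) (nth 0%N cs b)) = rk f rs cs.
Proof. by case: m / em; case: p / ep. Qed.

Lemma rk_tr f rs cs : rk f rs cs = rk (fun a b => f b a) cs rs.
Proof.
rewrite /rk -mxrank_tr; congr (\rank _); apply/matrixP => i j; rewrite !mxE //.
Qed.

Lemma rk_ext f g rs cs :
  (forall a b, a \in rs -> b \in cs -> f a b = g a b) -> rk f rs cs = rk g rs cs.
Proof.
move=> H; rewrite /rk; congr (\rank _); apply/matrixP => i j; rewrite !mxE.
by apply: H; apply: mem_nth.
Qed.

Lemma rank_lunit m n (U : 'M[K]_m) (A : 'M[K]_(m, n)) :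
  U \in unitmx -> \rank (U *m A) = \rank A.
Proof.
move=> hU; rewrite -mxrank_tr trmx_mul mxrankMfree ?mxrank_tr //.
by rewrite row_free_unit unitmx_tr.
Qed.

Lemma rk_perm_rows f rs rs' cs : perm_eq rs rs' -> rk f rs cs = rk f rs' cs.
Proof.
move=> hp.
have /perm.tuple_permP [p hrs] : perm_eq rs (in_tuple rs') by [].
have es : size rs = size rs' by rewrite (perm_size hp).
rewrite -(rk_gen f es (erefl (size cs))) /rk.
have -> : (\matrix_(a < size rs', b < size cs) f (nth 0%N rs a) (nth 0%N cs b))
   = row_perm p (\matrix_(a < size rs', b < size cs) f (nth 0%N rs' a) (nth 0%N cs b)).
  apply/matrixP => i j; rewrite !mxE; congr (f _ _).
  rewrite hrs. 
  have := tnth_mktuple (fun i0 => tnth (in_tuple rs') (perm.fun_of_perm p i0)) i.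
  rewrite (tnth_nth 0%N) /= => ->.
  by rewrite (tnth_nth 0%N).
by rewrite row_permE rank_lunit // unitmx_perm.
Qed.

Lemma rk_perm f rs rs' cs cs' : perm_eq rs rs' -> perm_eq cs cs' ->
  rk f rs cs = rk f rs' cs'.
Proof.
move=> h1 h2; rewrite (rk_perm_rows _ _ h1) rk_tr (rk_perm_rows _ _ h2).
by rewrite -rk_tr.
Qed.

Lemma rk_zero_row f r rs cs : (forall c, c \in cs -> f r c = 0) ->
  rk f (r :: rs) cs = rk f rs cs.
Proof.
move=> H; rewrite /rk.
have -> : (\matrix_(a < size (r :: rs), b < size cs) f (nth 0%N (r :: rs) a) (nth 0%N cs b))
  = col_mx (0 : 'M_(1, size cs)) (\matrix_(a < size rs, b < size cs) f (nth 0%N rs a) (nth 0%N cs b)).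
  apply/matrixP => i j; rewrite !mxE.
  case: (@splitP 1 (size rs) i) => [k ek|k ek]; rewrite !mxE.
    have -> : (i : nat) = 0%N by rewrite ek; case: (k) => [[]].
    by rewrite /= H // mem_nth.
  by rewrite ek.
exact: (rank_col_0mx 1 _).
Qed.

Lemma rk_zero_rows f zs rs cs :
  (forall r c, r \in zs -> c \in cs -> f r c = 0) ->
  rk f (zs ++ rs) cs = rk f rs cs.
Proof.
elim: zs => [//|z zs IH] H /=.
rewrite rk_zero_row ?IH // => [r c hr hc|c hc]; apply: H => //.
  by rewrite inE hr orbT.
by rewrite inE eqxx.
Qed.

Lemma rk_pivot f r c rs cs : f r c = 1 -> (forall c', c' \in cs -> f r c' = 0) ->
  rk f (r :: rs) (c :: cs) = (rk f rs cs).+1.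
Proof.
move=> h1 h0; rewrite /rk.
set M := \matrix_(a < size rs, b < size cs) f (nth 0%N rs a) (nth 0%N cs b).
set u := \matrix_(a < size rs, b < 1) f (nth 0%N rs a) c.
have -> : (\matrix_(a < size (r :: rs), b < size (c :: cs))
     f (nth 0%N (r :: rs) a) (nth 0%N (c :: cs) b))
  = block_mx (1%:M : 'M_1) 0 u M.
  apply/matrixP => i j; rewrite [RHS]mxE.
  case: (@splitP 1 (size rs) i) => k ek; rewrite [RHS]mxE; case: (@splitP 1 (size cs) j) => l el; rewrite !mxE.
  - have -> : (i : nat) = 0%N by rewrite ek; case: (k) => [[]].
    have -> : (j : nat) = 0%N by rewrite el; case: (l) => [[]].
    by rewrite h1 (ord1 k) (ord1 l) eqxx.
  - have -> : (i : nat) = 0%N by rewrite ek; case: (k) => [[]].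
    by rewrite el /= add0n h0 // mem_nth.
  - have -> : (j : nat) = 0%N by rewrite el; case: (l) => [[]].
    by rewrite ek.
  - by rewrite ek el.
set L := block_mx (1%:M : 'M_1) 0 (- u) (1%:M).
have hL : L \in unitmx by rewrite unitmxE det_lblock !det1 mulr1 unitr1.
rewrite -(rank_lunit (block_mx 1%:M 0 u M) hL) mulmx_block !mul1mx !mul0mx !mulmx0 !addr0 !mulmx1 add0r.
rewrite addNr rank_diag_block_mx mxrank1 //.
Qed.


Lemma rk_zero_cols f (rs zs cs : seq nat) :
  (forall r c, r \in rs -> c \in zs -> f r c = 0) ->
  rk f rs (zs ++ cs) = rk f rs cs.
Proof.
by move=> H; rewrite rk_tr rk_zero_rows ?(rk_tr f) // => c r hc hr; apply: H.
Qed.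

Lemma rk_filter_rows f (xs : seq nat) (P Q : pred nat) (cs : seq nat) :
  (forall x c, x \in xs -> P x -> ~~ Q x -> c \in cs -> f x c = 0) ->
  rk f (filter P xs) cs = rk f (filter (fun x => P x && Q x) xs) cs.
Proof.
move=> H.
have hp : perm_eq (filter P xs)
   (filter (predC Q) (filter P xs) ++ filter Q (filter P xs)).
  by rewrite perm_sym perm_catC perm_filterC.
rewrite (rk_perm_rows _ _ hp) rk_zero_rows.
  by rewrite -filter_predI; congr rk; apply: eq_filter => x /=; rewrite andbC.
move=> r c; rewrite mem_filter => /andP [hq]; rewrite mem_filter => /andP [hP hx].
by apply: H.
Qed.

Lemma rk_filter_cols f (xs ys : seq nat) (P Q : pred nat) :
  (forall x y, x \in xs -> y \in ys -> P y -> ~~ Q y -> f x y = 0) ->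
  rk f xs (filter P ys) = rk f xs (filter (fun y => P y && Q y) ys).
Proof.
move=> H; rewrite rk_tr (@rk_filter_rows _ ys P Q) -?(rk_tr f) // => y x hy hP hQ hx.
by apply: H.
Qed.

Lemma rk_filter_equiv f (xs ys : seq nat) (P1 P2 C1 C2 : pred nat) :
  (forall x y, x \in xs -> y \in ys -> f x y != 0 ->
     (P1 x && C1 y) = (P2 x && C2 y)) ->
  rk f (filter P1 xs) (filter C1 ys) = rk f (filter P2 xs) (filter C2 ys).
Proof.
move=> H.
have step : forall P1 P2 C1 C2 : pred nat,
  (forall x y, x \in xs -> y \in ys -> f x y != 0 ->
     (P1 x && C1 y) = (P2 x && C2 y)) ->
  rk f (filter P1 xs) (filter C1 ys) =
  rk f (filter (fun x => P1 x && P2 x) xs) (filter (fun y => C1 y && C2 y) ys).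
  move=> Q1 Q2 D1 D2 HH.
  rewrite (@rk_filter_rows f xs Q1 Q2) ?(@rk_filter_cols f _ ys D1 D2) //.
    move=> x y; rewrite mem_filter => /andP [/andP [h1 h2] hx] hy hD1 hD2.
    apply/eqP; apply: contraTT hD2 => /(HH _ _ hx hy); rewrite h1 hD1 /=.
    by move/esym/andP => [_ ->].
  move=> x y hx hQ1 hQ2; rewrite mem_filter => /andP [hD1 hy].
  apply/eqP; apply: contraTT hQ2 => /(HH _ _ hx hy); rewrite hQ1 hD1 /=.
  by move/esym/andP => [-> _].
rewrite (step P1 P2 C1 C2) // (step P2 P1 C2 C1).
  by congr rk; apply: eq_filter => x; rewrite andbC.
by move=> x y hx hy hf; rewrite (H x y).
Qed.

Lemma rk_eq0 f (rs cs : seq nat) : rk f rs cs = 0%N ->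
  forall a b, a \in rs -> b \in cs -> f a b = 0.
Proof.
rewrite /rk => /eqP; rewrite mxrank_eq0 => /eqP H a b ha hb.
have hia : (index a rs < size rs)%N by rewrite index_mem.
have hib : (index b cs < size cs)%N by rewrite index_mem.
have := congr1 (fun M : 'M[K]_(size rs, size cs) => M (Ordinal hia) (Ordinal hib)) H.
by rewrite !mxE /= !nth_index.
Qed.

Lemma rk_pivots_iota f r0 c0 u (rs cs : seq nat) :
  (forall t, (t < u)%N -> f (r0 + t)%N (c0 + t)%N = 1) ->
  (forall t t', (t < u)%N -> (t' < u)%N -> t != t' -> f (r0 + t)%N (c0 + t')%N = 0) ->
  (forall t b, (t < u)%N -> b \in cs -> f (r0 + t)%N b = 0) ->
  rk f (iota r0 u ++ rs) (iota c0 u ++ cs) = (u + rk f rs cs)%N.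
Proof.
elim: u r0 c0 => [//|u IH] r0 c0 h1 h2 h3 /=.
rewrite rk_pivot.
- rewrite IH //.
  + by move=> t ht; have := h1 t.+1; rewrite !addnS -!addSn => ->.
  + move=> t t' ht ht' htt; have := h2 t.+1 t'.+1; rewrite !addnS -!addSn => -> //.
  + by move=> t b ht hb; have := h3 t.+1 b; rewrite !addnS -!addSn => ->.
- by have := h1 0%N; rewrite !addn0 => ->.
- move=> c'; rewrite mem_cat mem_iota => /orP [/andP [hc1 hc2]|hc].
    have e : c' = (c0 + (c' - c0))%N by lia.
    rewrite e -[r0]addn0; apply: h2 => //; lia.
  by have := h3 0%N c'; rewrite addn0 => ->.
Qed.

End Rk.

Section Mxe.
Variable K : fieldType.

Lemma mxeE m p (A : 'M[K]_(m, p)) a b (ha : (a < m)%N) (hb : (b < p)%N) :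
  mxe A a b = A (Ordinal ha) (Ordinal hb).
Proof.
rewrite /mxe (insubT (fun x => x < m)%N ha) (insubT (fun x => x < p)%N hb) /=.
by congr (A _ _); apply: val_inj.
Qed.

Lemma mxe_out m p (A : 'M[K]_(m, p)) a b : ~~ ((a < m) && (b < p))%N -> mxe A a b = 0.
Proof.
rewrite /mxe => h; case: insubP => [i hi _|//]; case: insubP => [j hj _|//].
by rewrite hi hj in h.
Qed.

Lemma mxe0 m p a b : mxe (0 : 'M[K]_(m, p)) a b = 0.
Proof.
case: (boolP ((a < m) && (b < p))%N) => [/andP [ha hb]|h]; last by rewrite mxe_out.
by rewrite (mxeE _ ha hb) mxE.
Qed.

Lemma mxe1 k a b : (a < k)%N -> (b < k)%N -> mxe (1%:M : 'M[K]_k) a b = (a == b)%:R.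
Proof. by move=> ha hb; rewrite (mxeE _ ha hb) mxE. Qed.

Lemma mxe_block m1 m2 n1 n2 (A : 'M[K]_(m1, n1)) (B : 'M[K]_(m1, n2))
   (C : 'M[K]_(m2, n1)) (D : 'M[K]_(m2, n2)) a b :
  (a < m1 + m2)%N -> (b < n1 + n2)%N ->
  mxe (block_mx A B C D) a b =
  if (a < m1)%N then (if (b < n1)%N then mxe A a b else mxe B a (b - n1))
  else (if (b < n1)%N then mxe C (a - m1) b else mxe D (a - m1) (b - n1)).
Proof.
move=> ha hb; rewrite (mxeE _ ha hb).
case: (ltnP a m1) => h1; case: (ltnP b n1) => h2.
- have -> : Ordinal ha = lshift m2 (Ordinal h1) by apply: val_inj.
  have -> : Ordinal hb = lshift n2 (Ordinal h2) by apply: val_inj.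
  by rewrite block_mxEul (mxeE _ h1 h2).
- have h2' : (b - n1 < n2)%N by lia.
  have -> : Ordinal ha = lshift m2 (Ordinal h1) by apply: val_inj.
  have -> : Ordinal hb = rshift n1 (Ordinal h2') by apply: val_inj => /=; lia.
  by rewrite block_mxEur (mxeE _ h1 h2').
- have h1' : (a - m1 < m2)%N by lia.
  have -> : Ordinal ha = rshift m1 (Ordinal h1') by apply: val_inj => /=; lia.
  have -> : Ordinal hb = lshift n2 (Ordinal h2) by apply: val_inj.
  by rewrite block_mxEdl (mxeE _ h1' h2).
- have h1' : (a - m1 < m2)%N by lia.
  have h2' : (b - n1 < n2)%N by lia.
  have -> : Ordinal ha = rshift m1 (Ordinal h1') by apply: val_inj => /=; lia.
  have -> : Ordinal hb = rshift n1 (Ordinal h2') by apply: val_inj => /=; lia.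
  by rewrite block_mxEdr (mxeE _ h1' h2').
Qed.


Lemma mxeZ m p (A : 'M[K]_(m, p)) a b : (a < m + p)%N -> (b < p + m)%N ->
  mxe (block_mx A 1%:M 1%:M 0) a b =
  if (a < m)%N then (if (b < p)%N then mxe A a b else (a == b - p)%N%:R)
  else (if (b < p)%N then (a - m == b)%N%:R else 0).
Proof.
move=> ha hb; rewrite mxe_block //.
case: (ltnP a m) => h1; case: (ltnP b p) => h2 //; rewrite ?mxe0 // mxe1 //; lia.
Qed.

Lemma iota_split0 P m : iota 0 P = iota 0 (minn P m) ++ iota m (P - m).
Proof.
case: (leqP P m) => h.
  by rewrite (_ : P - m = 0)%N ?cats0 //; lia.
rewrite -iotaD; congr iota; lia.
Qed.

Lemma iota_split a b c : (b <= c)%N -> iota a c = iota a b ++ iota (a + b) (c - b).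
Proof. by move=> h; rewrite -iotaD subnKC. Qed.

Lemma natr_eqF (x y : nat) : x != y -> (x == y)%:R = 0 :> K.
Proof. by move/negbTE => ->. Qed.
Lemma natr_eqT (x y : nat) : x = y -> (x == y)%:R = 1 :> K.
Proof. by move=> ->; rewrite eqxx. Qed.

Section ZE.
Variables (m p : nat) (A : 'M[K]_(m, p)).
Let F := mxe (block_mx A 1%:M 1%:M 0).
Lemma FA a b : (a < m)%N -> (b < p)%N -> F a b = mxe A a b.
Proof. by move=> ha hb; rewrite /F mxeZ ?ha ?hb //; lia. Qed.
Lemma FB a b : (a < m)%N -> (p <= b < p + m)%N -> F a b = (a == b - p)%N%:R.
Proof. by move=> ha /andP [hb1 hb2]; rewrite /F mxeZ ?ha ?ltnNge ?hb1 //; lia. Qed.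
Lemma FC a b : (m <= a < m + p)%N -> (b < p)%N -> F a b = (a - m == b)%N%:R.
Proof. by move=> /andP [ha1 ha2] hb; rewrite /F mxeZ ?hb ?ltnNge ?ha1 //; lia. Qed.
Lemma FD a b : (m <= a)%N -> (p <= b)%N -> F a b = 0.
Proof.
move=> ha hb; case: (boolP ((a < m + p) && (b < p + m))%N) => [/andP [h1 h2]|h].
  by rewrite /F mxeZ // ltnNge ha /= ltnNge hb.
by rewrite /F mxe_out.
Qed.
End ZE.

Lemma rank_Zsub m p (A : 'M[K]_(m, p)) P Q : (P <= m + p)%N -> (Q <= p + m)%N ->
  rk (mxe (block_mx A 1%:M 1%:M 0)) (iota 0 P) (iota 0 Q) =
  (minn (P - m) (minn Q p) + minn (Q - p) (minn P m) +
   rk (mxe A) (iota (minn (Q - p) (minn P m)) (minn P m - minn (Q - p) (minn P m)))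
              (iota (minn (P - m) (minn Q p)) (minn Q p - minn (P - m) (minn Q p))))%N.
Proof.
move=> hP hQ.
set F := mxe (block_mx A 1%:M 1%:M 0).
set P1 := minn P m; set Q1 := minn Q p.
set u := minn (P - m) Q1; set v := minn (Q - p) P1.
rewrite (iota_split0 P m) (iota_split0 Q p) -/P1 -/Q1.
rewrite (@iota_split m u (P - m)); last by lia.
rewrite (@iota_split 0 u Q1); last by lia.
have hp1 : perm_eq (iota 0 P1 ++ iota m u ++ iota (m + u) (P - m - u))
                   (iota m u ++ (iota (m + u) (P - m - u) ++ iota 0 P1)).
  by rewrite perm_catC -catA perm_refl.
rewrite (rk_perm_rows _ _ hp1) -catA rk_pivots_iota; first last.
- move=> t b ht; rewrite mem_cat !mem_iota => /orP [] /andP [hb1 hb2].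
    by rewrite /F FC ?natr_eqF //; lia.
  by rewrite /F FD //; lia.
- by move=> t t' ht ht' htt; rewrite /F FC ?natr_eqF //; lia.
- by move=> t ht; rewrite /F FC ?natr_eqT //; lia.
rewrite rk_zero_rows; last first.
  move=> r c; rewrite !mem_cat !mem_iota => hr /orP [] /andP [hc1 hc2].
    by rewrite /F FC ?natr_eqF //; lia.
  by rewrite /F FD //; lia.
rewrite -addnA; congr addn.
rewrite rk_tr.
rewrite (@iota_split p v (Q - p)); last by lia.
rewrite (@iota_split 0 v P1); last by lia.
have hp2 : perm_eq (iota (0 + u) (Q1 - u) ++ iota p v ++ iota (p + v) (Q - p - v))
                   (iota p v ++ (iota (p + v) (Q - p - v) ++ iota (0 + u) (Q1 - u))).
  by rewrite perm_catC -catA perm_refl.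
rewrite (rk_perm_rows _ _ hp2) rk_pivots_iota; first last.
- move=> t b ht; rewrite mem_iota => /andP [hb1 hb2] /=.
  by rewrite /F FB ?natr_eqF //; lia.
- by move=> t t' ht ht' htt /=; rewrite /F FB ?natr_eqF //; lia.
- by move=> t ht /=; rewrite /F FB ?natr_eqT //; lia.
rewrite rk_zero_rows; last first.
  move=> r c; rewrite !mem_iota => hr /andP [hc1 hc2] /=.
  by rewrite /F FB ?natr_eqF //; lia.
rewrite add0n -rk_tr; congr addn.
apply: rk_ext => a b; rewrite !mem_iota => ha hb.
by rewrite /F FA //; lia.
Qed.

End Mxe.

End W.
Import W.

Module Q1.

Section Sums.

Definition Sm (s : seq nat) k := sumn (take k s).

Lemma S_le s k : Sm s k <= sumn s.
Proof. by rewrite /Sm -{2}(cat_take_drop k s) sumn_cat leq_addr. Qed.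

Lemma S_full s k : size s <= k -> Sm s k = sumn s.
Proof. by move=> h; rewrite /Sm take_oversize. Qed.

Lemma S_mono s a b : a <= b -> Sm s a <= Sm s b.
Proof.
move=> h; rewrite /Sm -(subnKC h) takeD sumn_cat leq_addr //.
Qed.

Lemma S_min s a b : minn (Sm s a) (Sm s b) = Sm s (minn a b).
Proof.
case: (leqP a b) => h.
  by rewrite (minn_idPl (S_mono s h)).
by rewrite (minn_idPr (S_mono s (ltnW h))).
Qed.

Lemma S_cat s1 s2 i : Sm (s1 ++ s2) i = Sm s1 (minn i (size s1)) + Sm s2 (i - size s1).
Proof.
rewrite /Sm take_cat; case: (ltnP i (size s1)) => h.
  by rewrite (_ : i - size s1 = 0) ?take0 ?addn0 //; lia.
by rewrite take_size sumn_cat.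
Qed.

Lemma S_S s k : k < size s -> Sm s k.+1 = Sm s k + nth 0 s k.
Proof.
move=> h; rewrite /Sm (take_nth 0 h) -cats1 sumn_cat /= addn0 //.
Qed.

Lemma bidx_cons x s r :
  bidx (x :: s) r = if x <= r then (bidx s (r - x)).+1 else 0.
Proof.
rewrite /bidx /= (_ : iota 1 (size s) = map (addn 1) (iota 0 (size s))); last by rewrite -iotaDl.
rewrite count_map take0 /= addn0; case: leqP => h.
  rewrite add1n; congr (_.+1); apply: eq_count => i /=.
  by rewrite add1n leq_subRL.
rewrite add0n; apply/eqP; rewrite -leqn0 leqNgt -has_count; apply/hasPn => i _ /=.
lia.
Qed.

Lemma bidx_leq s r k : r < sumn s -> (Sm s k <= r) = (k <= bidx s r).
Proof.
elim: s r k => [//|x s IH] r k /= hr.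
rewrite bidx_cons; case: k => [|k]; first by rewrite /Sm take0.
rewrite /Sm /= -/(Sm s k); case: (leqP x r) => h.
  by rewrite ltnS -IH; lia.
lia.
Qed.

Lemma bidx_lt s r : r < sumn s -> bidx s r < size s.
Proof.
move=> hr; rewrite ltnNge -bidx_leq // S_full //; lia.
Qed.

Lemma bidx_bounds s r : r < sumn s ->
  Sm s (bidx s r) <= r /\ r < Sm s (bidx s r) + nth 0 s (bidx s r).
Proof.
move=> hr; split; first by rewrite bidx_leq.
rewrite -S_S ?bidx_lt // ltnNge bidx_leq //; lia.
Qed.

Lemma boff_lt s r : r < sumn s -> boff s r < nth 0 s (bidx s r).
Proof. by move=> hr; have [h1 h2] := bidx_bounds hr; move: h1 h2; rewrite /boff /Sm; lia. Qed.

Lemma boff_eq s r : r < sumn s -> Sm s (bidx s r) + boff s r = r.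
Proof. by move=> hr; have [h1 h2] := bidx_bounds hr; move: h1 h2; rewrite /boff /Sm; lia. Qed.

Lemma iota_filter_range lo hi N : lo <= hi <= N ->
  filter (fun a => lo <= a < hi) (iota 0 N) = iota lo (hi - lo).
Proof.
move=> /andP [h1 h2].
rewrite -(subnKC h2) iotaD -(subnKC h1) iotaD !filter_cat add0n.
rewrite (@eq_in_filter _ _ pred0); last by move=> a; rewrite mem_iota /=; lia.
rewrite (@eq_in_filter _ _ predT (iota lo (hi - lo))); last by move=> a; rewrite mem_iota /=; lia.
rewrite (@eq_in_filter _ _ pred0 (iota (lo + (hi - lo)) _)); last by move=> a; rewrite mem_iota /=; lia.
by rewrite !filter_pred0 filter_predT cats0 addKn.
Qed.

Lemma iota_filter s ra rb : ra <= rb ->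
  iota (Sm s ra) (Sm s rb - Sm s ra) =
  filter (fun a => ra <= bidx s a < rb) (iota 0 (sumn s)).
Proof.
move=> h.
have h1 := S_mono s h; have h2 := S_le s rb.
rewrite -(@iota_filter_range _ _ (sumn s)); last by rewrite h1 h2.
apply: eq_in_filter => a; rewrite mem_iota add0n => /andP [_ ha].
by rewrite (bidx_leq ra ha) [a < _]ltnNge (bidx_leq rb ha) -ltnNge.
Qed.

End Sums.

End Q1.
Import Q1.

Module Q2.
Import GRing.Theory.
Local Open Scope ring_scope.

Section Quiver.
Variable K : fieldType.
Variable n : nat.
Variables dy dx : nat -> nat.

Local Notation sy := (sy n dy).
Local Notation sxr := (sxr n dx).
Local Notation dyt := (dyt n dy).
Local Notation dxt := (dxt n dx).

Lemma size_sy : size sy = n.+1.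
Proof. by rewrite /Defs.sy size_map size_iota. Qed.
Lemma size_sxr : size sxr = n.
Proof. by rewrite /Defs.sxr size_map size_rev size_iota. Qed.
Lemma nth_sy p : (p <= n)%N -> nth 0%N sy p = dy p.
Proof. by move=> h; rewrite /Defs.sy (nth_map 0%N) ?size_iota // nth_iota. Qed.
Lemma nth_sxr q : (q < n)%N -> nth 0%N sxr q = dx (n - q).
Proof.
move=> h; rewrite /Defs.sxr (nth_map 0%N) ?size_rev ?size_iota //.
rewrite nth_rev ?size_iota // nth_iota; last by lia.
congr dx; lia.
Qed.

Definition rowsR ra rb := filter (fun a => ra <= bidx sy a < rb)%N (iota 0 dyt).
Definition colsR ca cb := filter (fun b => ca <= bidx sxr b < cb)%N (iota 0 dxt).
Definition rbI i := minn i n.+1.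
Definition raI i j := minn (j - n) (rbI i).
Definition cbJ j := minn j n.
Definition caI i j := minn (i - n.+1) (cbJ j).

Lemma Scat_sub s1 s2 i :
  (Sm (s1 ++ s2) i - sumn s1 = Sm s2 (i - size s1))%N /\
  minn (Sm (s1 ++ s2) i) (sumn s1) = Sm s1 (minn i (size s1)).
Proof.
rewrite S_cat; case: (leqP i (size s1)) => h.
  rewrite (_ : i - size s1 = 0)%N; last by lia.
  have S0 : forall s, Sm s 0 = 0%N by move=> s; rewrite /Sm take0.
  rewrite !S0 addn0.
  have := S_le s1 i; split; lia.
rewrite (S_full (leqnn _)); split; lia.
Qed.

Lemma KF (A : 'M[K]_(dyt, dxt)) i j :
  rankZ (block_mx A 1%:M 1%:M 0 : Ymat K n dy dx) i j =
  (Sm sxr (caI i j) + Sm sy (raI i j) +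
   rk (mxe A) (rowsR (raI i j) (rbI i)) (colsR (caI i j) (cbJ j)))%N.
Proof.
rewrite /rankZ.
set P := sumn (take i (zrows n dy dx)); set Q := sumn (take j (zcols n dy dx)).
have -> : \rank (\matrix_(a < P, b < Q) mxe (block_mx A 1%:M 1%:M 0 : Ymat K n dy dx) a b)
   = rk (mxe (block_mx A 1%:M 1%:M 0)) (iota 0 P) (iota 0 Q).
  rewrite -(rk_gen _ (size_iota 0 P) (size_iota 0 Q)); congr (\rank _).
  by apply/matrixP => a b; rewrite !mxE !nth_iota.
have hP : (P <= dyt + dxt)%N.
  by have := S_le (zrows n dy dx) i; rewrite /Sm /zrows sumn_cat.
have hQ : (Q <= dxt + dyt)%N.
  by have := S_le (zcols n dy dx) j; rewrite /Sm /zcols sumn_cat.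
rewrite rank_Zsub //.
have [e1 e2] := Scat_sub sy sxr i.
have [e3 e4] := Scat_sub sxr sy j.
rewrite /P /Q -/(Sm _ i) -/(Sm _ j) /zrows /zcols.
rewrite /dyt /dxt e1 e2 e3 e4 size_sy size_sxr !S_min.
rewrite /rowsR /colsR -!iota_filter; last first.
- by rewrite /raI /rbI /caI /cbJ; lia.
- by rewrite /raI /rbI /caI /cbJ; lia.
by [].
Qed.

Lemma MQ_nz (V : rep K n dy dx) a b : (a < dyt)%N -> (b < dxt)%N ->
  mxe (MQ V) a b != 0 ->
  bidx sy a = (n - (bidx sxr b).+1)%N \/ bidx sy a = (n - bidx sxr b)%N.
Proof.
move=> ha hb; rewrite (mxeE _ ha hb) mxE /=.
case: insubP => [i _ ei|]; last by rewrite eqxx.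
case: (bidx sy a =P i) => [e|_]; first by move=> _; left; rewrite e ei.
case: (bidx sy a =P i.+1) => [e|_]; last by rewrite eqxx.
move=> _; rewrite e.
have hq : (bidx sxr b < n)%N by have := bidx_lt hb; rewrite size_sxr.
have ei2 : (i : nat) = (n - (bidx sxr b).+1)%N := ei; right; lia.
Qed.

Lemma BE (V : rep K n dy dx) (Pr Jr Pc Jc : pred nat) :
  (forall p q, (p <= n)%N -> (q < n)%N -> (p = n - q.+1 \/ p = n - q)%N ->
     (Pr p && Pc q) = (Jr p && Jc q)) ->
  rk (mxe (MQ V)) (filter (fun a => Pr (bidx sy a)) (iota 0 dyt))
                  (filter (fun b => Pc (bidx sxr b)) (iota 0 dxt)) =
  rk (mxe (MQ V)) (filter (fun a => Jr (bidx sy a)) (iota 0 dyt))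
                  (filter (fun b => Jc (bidx sxr b)) (iota 0 dxt)).
Proof.
move=> H; apply: rk_filter_equiv => a b; rewrite !mem_iota !add0n => /andP [_ ha] /andP [_ hb] hnz.
apply: H.
- by have := bidx_lt ha; rewrite size_sy.
- by have := bidx_lt hb; rewrite size_sxr.
- exact: MQ_nz hnz.
Qed.

Lemma rk_nil (f : nat -> nat -> K) cs : rk f [::] cs = 0%N.
Proof. by apply/eqP; rewrite -leqn0 /rk rank_leq_row. Qed.

Lemma rk_pred0 (V : rep K n dy dx) :
  rk (mxe (MQ V)) (filter (fun a => pred0 (bidx sy a)) (iota 0 dyt))
                  (filter (fun b => pred0 (bidx sxr b)) (iota 0 dxt)) = 0%N.
Proof. by rewrite filter_pred0 rk_nil. Qed.

Lemma rJ_rk (V : rep K n dy dx) a0 b0 :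
  rJ V a0 b0 = rk (mxe (MQ V))
    (filter (fun a => (fun p => inJ a0 b0 (2 * p)) (bidx sy a)) (iota 0 dyt))
    (filter (fun b => (fun q => inJ a0 b0 (2 * (n - q)).-1) (bidx sxr b)) (iota 0 dxt)).
Proof. by []. Qed.

End Quiver.

Section Comb.
Local Open Scope nat_scope.
Lemma G1 n ra rb ca cb : ra <= rb <= n.+1 -> ca <= cb <= n ->
  exists a0 b0, (a0 <= b0 <= 2 * n)%N /\ forall q, q < n ->
   ((ra <= n - q.+1 < rb) && (ca <= q < cb) = inJ a0 b0 (2 * (n - q.+1)) && inJ a0 b0 (2 * (n-q)).-1) /\
   ((ra <= n - q < rb) && (ca <= q < cb) = inJ a0 b0 (2 * (n - q)) && inJ a0 b0 (2 * (n-q)).-1).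
Proof.
move=> hr hc; rewrite /inJ.
set kl := n - cb + 1; set kh := n - ca.
case: (leqP kl ra) => h1; case: (ltnP kh rb) => h2.
- case: (leqP (2 * ra).-1 (2 * kh)) => h3.
    exists (2 * ra).-1, (2 * kh); split; first lia.
    move=> k hk; split; lia.
  exists 0, 0; split; first lia. move=> k hk; split; lia.
- case: (leqP (2 * ra).-1 (2 * rb).-1) => h3.
    exists (2 * ra).-1, (2 * rb).-1; split; first lia.
    move=> k hk; split; lia.
  exists 0, 0; split; first lia. move=> k hk; split; lia.
- case: (leqP (2 * (kl-1)) (2 * kh)) => h3.
    exists (2 * (kl-1)), (2 * kh); split; first lia.
    move=> k hk; split; lia.
  exists 0, 0; split; first lia. move=> k hk; split; lia.
- case: (leqP (2 * (kl-1)) (2 * rb).-1) => h3.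
    exists (2 * (kl-1)), (2 * rb).-1; split; first lia.
    move=> k hk; split; lia.
  exists 0, 0; split; first lia. move=> k hk; split; lia.
Qed.

Variable n : nat.
Local Notation rbI := (rbI n).
Local Notation raI := (raI n).
Local Notation cbJ := (cbJ n).
Local Notation caI := (caI n).

Lemma C1 i j : 1 <= n -> 1 <= i <= 2 * n+1 -> 1 <= j <= 2 * n+1 ->
  exists a0 b0, (a0 <= b0 <= 2 * n) /\ forall p q, p <= n -> q < n -> (p = n - q.+1 \/ p = n - q) ->
   ((raI i j <= p < rbI i) && (caI i j <= q < cbJ j)) =
   (inJ a0 b0 (2 * p) && inJ a0 b0 (2 * (n-q)).-1).
Proof.
move=> hn hi hj.
have hG := @G1 n (raI i j) (rbI i) (caI i j) (cbJ j).
have [a0 [b0 [hab H]]] := hG ltac:(rewrite /Q2.raI /Q2.rbI; lia) ltac:(rewrite /Q2.caI /Q2.cbJ; lia).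
exists a0, b0; split => // p q hp hq hb.
by have [H1 H2] := H q hq; case: hb => ->.
Qed.

Lemma C2 p q : 1 <= n -> p <= n -> q < n -> ~ (p = n - q.+1 \/ p = n - q) ->
  exists i j, (1 <= i <= 2 * n+1) /\ (1 <= j <= 2 * n+1) /\
    (raI i j <= p < rbI i) /\ (caI i j <= q < cbJ j) /\
    forall p' q', p' <= n -> q' < n -> (p' = n - q'.+1 \/ p' = n - q') ->
      ~~ ((raI i j <= p' < rbI i) && (caI i j <= q' < cbJ j)).
Proof.
move=> hn hp hq hb; rewrite /Q2.raI /Q2.rbI /Q2.caI /Q2.cbJ.
case: (ltnP p (n - q.+1)) => h.
  exists p.+1, q.+1; do 4 (split; first lia).
  move=> p' q' hp' hq' [] ->; lia.
exists (n.+1 + q), (n + p); do 4 (split; first lia).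
move=> p' q' hp' hq' [] ->; lia.
Qed.

Lemma C3 a0 b0 : 1 <= n -> a0 <= b0 <= 2 * n ->
  exists i j, (1 <= i <= 2 * n+1) /\ (1 <= j <= 2 * n+1) /\
    forall p q, p <= n -> q < n -> (p = n - q.+1 \/ p = n - q) ->
     ((raI i j <= p < rbI i) && (caI i j <= q < cbJ j)) =
     (inJ a0 b0 (2 * p) && inJ a0 b0 (2 * (n-q)).-1).
Proof.
move=> hn hab; rewrite /Q2.raI /Q2.rbI /Q2.caI /Q2.cbJ /inJ.
have [a ea] : exists a, a0 = 2 * a \/ a0 = (2 * a).+1 by exists (a0 %/ 2); lia.
have [b eb] : exists b, b0 = 2 * b \/ b0 = (2 * b).+1 by exists (b0 %/ 2); lia.
case: ea => ?; case: eb => ?; subst a0 b0.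
- case: (ltnP a n) => ha.
    exists (2 * n+1-b), (n - a); split; first lia; split; first lia.
    rewrite (_ : minn (2 * n+1-b) n.+1 = n.+1); last lia.
    rewrite (_ : minn (n - a) n = n - a); last lia.
    rewrite (_ : minn (n - a - n) n.+1 = 0); last lia.
    rewrite (_ : minn (2 * n+1-b - n.+1) (n - a) = n - b); last lia.
    move=> p q hp hq [] ->; lia.
  exists 1, n.+1; split; first lia; split; first lia.
  move=> p q hp hq [] ->; lia.
- exists b.+1, (n - a); split; first lia; split; first lia.
  rewrite (_ : minn b.+1 n.+1 = b.+1); last lia.
  rewrite (_ : minn (n - a) n = n - a); last lia.
  rewrite (_ : minn (n - a - n) b.+1 = 0); last lia.
  rewrite (_ : minn (b.+1 - n.+1) (n - a) = 0); last lia.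
  move=> p q hp hq [] ->; lia.
- exists (2 * n+1-b), (n + a.+1); split; first lia; split; first lia.
  rewrite (_ : minn (2 * n+1-b) n.+1 = n.+1); last lia.
  rewrite (_ : minn (n + a.+1) n = n); last lia.
  rewrite (_ : minn (n + a.+1 - n) n.+1 = a.+1); last lia.
  rewrite (_ : minn (2 * n+1-b - n.+1) n = n - b); last lia.
  move=> p q hp hq [] ->; lia.
- exists b.+1, (n + a.+1); split; first lia; split; first lia.
  rewrite (_ : minn b.+1 n.+1 = b.+1); last lia.
  rewrite (_ : minn (n + a.+1) n = n); last lia.
  rewrite (_ : minn (n + a.+1 - n) b.+1 = a.+1); last lia.
  rewrite (_ : minn (b.+1 - n.+1) n = 0); last lia.
  move=> p q hp hq [] ->; lia.
Qed.
End Comb.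


End Q2.
Import Q2.

Module Q3.
Import GRing.Theory.
Local Open Scope ring_scope.

Section Rebuild.
Variable K : fieldType.
Variable n : nat.
Variables dy dx : nat -> nat.

Local Notation sy := (sy n dy).
Local Notation sxr := (sxr n dx).
Local Notation dyt := (dyt n dy).
Local Notation dxt := (dxt n dx).

Definition VofA (A : 'M[K]_(dyt, dxt)) : rep K n dy dx :=
  Rep (fun i => \matrix_(a < dy i, b < dx i.+1) mxe A (Sm sy i + a) (Sm sxr (n - i.+1) + b))
      (fun i => \matrix_(a < dy i.+1, b < dx i.+1) mxe A (Sm sy i.+1 + a) (Sm sxr (n - i.+1) + b)).

Lemma mxe_ord m p (A : 'M[K]_(m, p)) (a : 'I_m) (b : 'I_p) : mxe A a b = A a b.
Proof. by rewrite (mxeE _ (ltn_ord a) (ltn_ord b)); congr (A _ _); apply: val_inj. Qed.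

Lemma MQ_VofA (A : 'M[K]_(dyt, dxt)) :
  (forall a b, (a < dyt)%N -> (b < dxt)%N ->
     ~ (bidx sy a = n - (bidx sxr b).+1 \/ bidx sy a = n - bidx sxr b)%N ->
     mxe A a b = 0) ->
  MQ (VofA A) = A.
Proof.
move=> HZ; apply/matrixP => a b; rewrite mxE /=.
have ha := ltn_ord a; have hb := ltn_ord b.
have hq : (bidx sxr b < n)%N by have := bidx_lt hb; rewrite size_sxr.
have hp : (bidx sy a <= n)%N by have := bidx_lt ha; rewrite size_sy.
have hoa := boff_lt ha; have hob := boff_lt hb.
have eoa := boff_eq ha; have eob := boff_eq hb.
rewrite nth_sxr // in hob.
have hi : (n - (bidx sxr b).+1 < n)%N by lia.
rewrite (insubT (fun x => x < n)%N hi) /=.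
case: (bidx sy a =P n - (bidx sxr b).+1)%N => [e|ne].
  have h1 : (boff sy a < dy (n - (bidx sxr b).+1))%N by rewrite -e -(@nth_sy n dy).
  have h2 : (boff sxr b < dx (n - (bidx sxr b).+1).+1)%N.
    by rewrite (_ : (n - (bidx sxr b).+1).+1 = n - bidx sxr b)%N //; lia.
  rewrite (mxeE _ h1 h2) mxE -mxe_ord; congr mxe; rewrite /=.
    by rewrite -e.
  by rewrite (_ : (n - (n - (bidx sxr b).+1).+1)%N = bidx sxr b) //; lia.
case: (bidx sy a =P (n - (bidx sxr b).+1).+1)%N => [e|ne2].
  have h1 : (boff sy a < dy (n - (bidx sxr b).+1).+1)%N by rewrite -e -(@nth_sy n dy) // e; lia.
  have h2 : (boff sxr b < dx (n - (bidx sxr b).+1).+1)%N.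
    by rewrite (_ : (n - (bidx sxr b).+1).+1 = n - bidx sxr b)%N //; lia.
  rewrite (mxeE _ h1 h2) mxE -mxe_ord; congr mxe; rewrite /=.
    by rewrite -e.
  by rewrite (_ : (n - (n - (bidx sxr b).+1).+1)%N = bidx sxr b) //; lia.
rewrite -mxe_ord HZ //; lia.
Qed.

End Rebuild.

End Q3.
Import Q3.
Import GRing.Theory.

Theorem proposition4p4 (K : fieldType) (n : nat) (dy dx : nat -> nat)
    (r : nat -> nat -> nat) :
  (1 <= n)%N ->
  @quiver_rank_array K n dy dx r ->
  forall Z : Ymat K n dy dx,
    @in_Ycirc K n dy dx Z ->
    ((forall i j : nat, (1 <= i <= 2 * n + 1)%N -> (1 <= j <= 2 * n + 1)%N ->
        @rankZ K n dy dx Z i j = @bR K n dy dx r i j)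
     <-> exists V : rep K n dy dx, @satisfies K n dy dx V r /\ Z = @zeta K n dy dx V).
Proof.
move=> hn [V1 hV1] Z [A ->].
set V0 := epsilon (inhabits (rep0 K n dy dx)) (fun V => satisfies V r).
have hV0 : satisfies V0 r.
  by apply: (epsilon_spec (inhabits (rep0 K n dy dx)) (fun V => satisfies V r)); exists V1.
have bRE : forall i j, @bR K n dy dx r i j = rankZ (zeta V0) i j by [].
pose Rr i j := fun p => (raI n i j <= p < rbI n i)%N.
pose Rc i j := fun q => (caI n i j <= q < cbJ n j)%N.
pose Jr a0 b0 := fun p => inJ a0 b0 (2 * p).
pose Jc a0 b0 := fun q => inJ a0 b0 (2 * (n - q)).-1.
split.
- move=> H.
  have HA : forall i j, (1 <= i <= 2 * n + 1)%N -> (1 <= j <= 2 * n + 1)%N ->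
     rk (mxe A) (rowsR n dy (raI n i j) (rbI n i)) (colsR n dx (caI n i j) (cbJ n j)) =
     rk (mxe (MQ V0)) (rowsR n dy (raI n i j) (rbI n i)) (colsR n dx (caI n i j) (cbJ n j)).
    move=> i j hi hj; have := H i j hi hj; rewrite bRE /zeta !KF.
    by move/addnI.
  have HZ : forall a b, (a < dyt n dy)%N -> (b < dxt n dx)%N ->
     ~ (bidx (sy n dy) a = n - (bidx (sxr n dx) b).+1 \/ bidx (sy n dy) a = n - bidx (sxr n dx) b)%N ->
     mxe A a b = 0%R.
    move=> a b ha hb hnb.
    have hq : (bidx (sxr n dx) b < n)%N by have := bidx_lt hb; rewrite size_sxr.
    have hp : (bidx (sy n dy) a <= n)%N by have := bidx_lt ha; rewrite size_sy.
    have [i [j [hi [hj [hr [hc hE]]]]]] := C2 hn hp hq hnb.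
    have Hb : forall p q, (p <= n)%N -> (q < n)%N -> (p = n - q.+1 \/ p = n - q)%N ->
        (Rr i j p && Rc i j q) = (pred0 p && pred0 q).
      by move=> p q hp' hq' hb'; apply/negbTE; apply: hE.
    have e0 : rk (mxe (MQ V0)) (rowsR n dy (raI n i j) (rbI n i)) (colsR n dx (caI n i j) (cbJ n j)) = 0%N
      := etrans (@BE K n dy dx V0 (Rr i j) pred0 (Rc i j) pred0 Hb) (rk_pred0 V0).
    rewrite -(HA i j hi hj) in e0.
    apply: (rk_eq0 e0); rewrite mem_filter mem_iota /=; apply/andP; split => //; lia.
  have eA := MQ_VofA HZ.
  exists (VofA A); split; last by rewrite /zeta eA.
  move=> a0 b0 hab; rewrite -(hV0 a0 b0 hab).
  have [i [j [hi [hj Hc]]]] := C3 hn hab.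
  have E1 := @BE K n dy dx (VofA A) (Rr i j) (Jr a0 b0) (Rc i j) (Jc a0 b0) Hc.
  have E0 := @BE K n dy dx V0 (Rr i j) (Jr a0 b0) (Rc i j) (Jc a0 b0) Hc.
  rewrite !rJ_rk -E1 -E0 eA.
  exact: HA.
- move=> [V [hV eZ]] i j hi hj.
  rewrite eZ bRE /zeta !KF; congr addn.
  have [a0 [b0 [hab Hc]]] := C1 hn hi hj.
  have E1 := @BE K n dy dx V (Rr i j) (Jr a0 b0) (Rc i j) (Jc a0 b0) Hc.
  have E0 := @BE K n dy dx V0 (Rr i j) (Jr a0 b0) (Rc i j) (Jc a0 b0) Hc.
  rewrite /rowsR /colsR E1 E0 -!rJ_rk.
  by rewrite (hV a0 b0 hab) (hV0 a0 b0 hab).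
Qed.
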